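(* Let $G=(V,E)$ be a finite, simple, undirected graph with $m=|E|\ge 1$ edges, and let $\mathcal{C}_1,\mathcal{C}_2\subseteq V$ be disjoint nonempty sets with $2m_i^{(1)}+m_e^{(1)}>0$ and $2m_i^{(2)}+m_e^{(2)}>0$, where $m_i^{(j)}$ is the number of edges with both endpoints in $\mathcal{C}_j$ and $m_e^{(j)}$ is the number of edges with exactly one endpoint in $\mathcal{C}_j$ (including edges to the other set). Let $m_e^{(12)}$ be the number of edges with one endpoint in $\mathcal{C}_1$ and the other in $\mathcal{C}_2$, and let $\mathcal{C}=\mathcal{C}_1\cup\mathcal{C}_2$. Then $\Delta\mathcal{P}^{\star}:=\mathcal{P}^{\star}_{\mathcal{C}}-\left(\mathcal{P}^{\star}_{\mathcal{C}_1}+\mathcal{P}^{\star}_{\mathcal{C}_2}\right)>0$ if and only if $$m_e^{(12)}>\frac{2m_i^{(2)}+m_e^{(2)}}{2m_i^{(1)}+m_e^{(1)}}\,m_i^{(1)}+\frac{2m_i^{(1)}+m_e^{(1)}}{2m_i^{(2)}+m_e^{(2)}}\,m_i^{(2)}.$$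
   Context: For a subset $\mathcal{D}\subseteq V$, let $m_i(\mathcal{D})$ be the number of edges with both endpoints in $\mathcal{D}$ and $m_e(\mathcal{D})$ the number of edges with exactly one endpoint in $\mathcal{D}$. The null-adjusted persistence of $\mathcal{D}$ is $\mathcal{P}^{\star}_{\mathcal{D}}=\frac{2m_i(\mathcal{D})}{2m_i(\mathcal{D})+m_e(\mathcal{D})}-\frac{2m_i(\mathcal{D})+m_e(\mathcal{D})}{2m}$, where $m=|E|$. *)

(* Defs.v *)
From HB Require Import structures.
From mathcomp Require Import all_boot all_order all_algebra.
Set Implicit Arguments. Unset Strict Implicit. Unset Printing Implicit Defensive.
Import Order.TTheory GRing.Theory Num.Theory.
Local Open Scope ring_scope.

Definition simple_graph (T : finType) (e : rel T) : Prop :=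
  symmetric e /\ irreflexive e.

Definition edges (T : finType) (e : rel T) : {set {set T}} :=
  [set E : {set T} | [exists x, exists y, e x y && (E == [set x; y])]].

Definition nedges (T : finType) (e : rel T) : nat := #|edges e|.

Definition m_int (T : finType) (e : rel T) (D : {set T}) : nat :=
  #|[set E in edges e | E \subset D]|.

Definition m_ext (T : finType) (e : rel T) (D : {set T}) : nat :=
  #|[set E in edges e | #|E :&: D| == 1%N]|.

Definition m_between (T : finType) (e : rel T) (C1 C2 : {set T}) : nat :=
  #|[set E in edges e | (#|E :&: C1| == 1%N) && (#|E :&: C2| == 1%N)]|.

Definition persistence (R : realFieldType) (T : finType) (e : rel T)
    (D : {set T}) : R :=
  (2 * (m_int e D)%:R) / (2 * (m_int e D)%:R + (m_ext e D)%:R)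
  - (2 * (m_int e D)%:R + (m_ext e D)%:R) / (2 * (nedges e)%:R).

(* Main.v *)
Require Import Defs.
From HB Require Import structures.
From mathcomp Require Import all_boot all_order all_algebra.
From mathcomp Require Import zify ring lra.
Import Order.TTheory GRing.Theory Num.Theory.

Lemma card_setP (T : finType) (A : {set T}) (P : pred T) :
  #|[set x in A | P x]| = (\sum_(x in A) (P x : nat))%N.
Proof.
rewrite -sum1_card big_mkcond /= [RHS]big_mkcond /=.
apply: eq_bigr => x _; rewrite !inE; by case: (x \in A); case: (P x).
Qed.

Lemma edge_card (T : finType) (e : rel T) E :
  irreflexive e -> E \in edges e -> #|E| = 2%N.
Proof.
move=> irr; rewrite inE => /existsP [x /existsP [y /andP [exy /eqP ->]]].
rewrite cards2; case: eqVneq => // xy; by subst y; rewrite irr in exy.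
Qed.

Lemma per_edge (T : finType) (E C1 C2 : {set T}) :
  #|E| = 2%N -> [disjoint C1 & C2] ->
  ((E \subset C1 :|: C2) : nat) = ((E \subset C1) : nat) + ((E \subset C2) : nat)
     + (((#|E :&: C1| == 1%N) && (#|E :&: C2| == 1%N)) : nat) /\
  ((#|E :&: (C1 :|: C2)| == 1%N) : nat) + 2 * (((#|E :&: C1| == 1%N) && (#|E :&: C2| == 1%N)) : nat)
   = ((#|E :&: C1| == 1%N) : nat) + ((#|E :&: C2| == 1%N) : nat).
Proof.
move=> hE dis.
have sub (D : {set T}) : (E \subset D) = (#|E :&: D| == 2%N).
  apply/idP/idP.
    by move=> s; rewrite (setIidPl s) hE.
  move=> /eqP h; apply/setIidPl/eqP; rewrite eqEcard subsetIl h hE //.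
have hU : #|E :&: (C1 :|: C2)| = (#|E :&: C1| + #|E :&: C2|)%N.
  rewrite setIUr cardsU.
  have -> : E :&: C1 :&: (E :&: C2) = set0.
    apply/setP => x; rewrite !inE.
    case h1: (x \in C1); case h2: (x \in C2); rewrite ?andbF ?andbT //=.
    by move: (disjointFr dis h1); rewrite h2.
  by rewrite cards0 subn0.
have hb : (#|E :&: (C1 :|: C2)| <= 2)%N by rewrite -hE subset_leq_card // subsetIl.
rewrite !sub hU; rewrite hU in hb.
move: hb; case: #|E :&: C1| => [|[|[|a]]]; case: #|E :&: C2| => [|[|[|b]]] //=.
Qed.
Lemma counts (T : finType) (e : rel T) (C1 C2 : {set T}) :
  simple_graph e -> [disjoint C1 & C2] ->
  m_int e (C1 :|: C2) = (m_int e C1 + m_int e C2 + m_between e C1 C2)%N /\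
  (m_ext e (C1 :|: C2) + 2 * m_between e C1 C2 = m_ext e C1 + m_ext e C2)%N.
Proof.
move=> [_ irr] dis; rewrite /m_int /m_ext /m_between !card_setP; split.
  rewrite -!big_split /=; apply: eq_bigr => E EE.
  by case: (@per_edge _ E C1 C2 (@edge_card _ e E irr EE) dis).
rewrite big_distrr /= -!big_split /=; apply: eq_bigr => E EE.
by case: (@per_edge _ E C1 C2 (@edge_card _ e E irr EE) dis).
Qed.

Local Open Scope ring_scope.

Theorem proposition5 (R : realFieldType) (T : finType) (e : rel T)
  (C1 C2 : {set T}) :
  simple_graph e ->
  (1 <= nedges e)%N ->
  [disjoint C1 & C2] ->
  C1 != set0 -> C2 != set0 ->
  (0 < 2 * m_int e C1 + m_ext e C1)%N ->
  (0 < 2 * m_int e C2 + m_ext e C2)%N ->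
  let v1 : R := 2 * (m_int e C1)%:R + (m_ext e C1)%:R in
  let v2 : R := 2 * (m_int e C2)%:R + (m_ext e C2)%:R in
  (0 < persistence R e (C1 :|: C2) - (persistence R e C1 + persistence R e C2))
  <->
  ((m_between e C1 C2)%:R > v2 / v1 * (m_int e C1)%:R + v1 / v2 * (m_int e C2)%:R).
Proof.
move=> sg _ dis _ _ p1 p2 v1 v2.
have [hi he] := @counts _ e C1 C2 sg dis.
rewrite /persistence hi.
have -> : (m_ext e (C1 :|: C2))%:R = (m_ext e C1)%:R + (m_ext e C2)%:R - 2 * (m_between e C1 C2)%:R :> R.
  have := congr1 (fun n : nat => n%:R : R) he; rewrite /= !natrD ?natrM => H.
  rewrite -H; ring.
rewrite -/v1 -/v2.
have hv1 : 0 < v1 by rewrite /v1 -[2]/(2%:R) -natrM -natrD ltr0n.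
have hv2 : 0 < v2 by rewrite /v2 -[2]/(2%:R) -natrM -natrD ltr0n.
rewrite !natrD.
set i1 := (m_int e C1)%:R : R.
set i2 := (m_int e C2)%:R : R.
set b := (m_between e C1 C2)%:R : R.
set M := (nedges e)%:R : R.
have -> : 2 * (i1 + i2 + b) + ((m_ext e C1)%:R + (m_ext e C2)%:R - 2 * b) = v1 + v2.
  by rewrite /v1 /v2; ring.
have Ev1 : 2 * i1 + (m_ext e C1)%:R = v1 by [].
have Ev2 : 2 * i2 + (m_ext e C2)%:R = v2 by [].
rewrite ?Ev1 ?Ev2 [(v1 + v2) / _]mulrDl.
move: (2 * M)^-1 => k.
have hv : 0 < v1 + v2 by lra.
have -> : 2 * (i1 + i2 + b) / (v1 + v2) - (v1 * k + v2 * k) -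
   (2 * i1 / v1 - v1 * k + (2 * i2 / v2 - v2 * k))
   = (2 * (b * v1 * v2 - i1 * v2 ^+ 2 - i2 * v1 ^+ 2)) / (v1 * v2 * (v1 + v2)).
  by field; rewrite ?mulf_neq0 ?gt_eqF.
have -> : v2 / v1 * i1 + v1 / v2 * i2 = (i1 * v2 ^+ 2 + i2 * v1 ^+ 2) / (v1 * v2).
  by field; rewrite ?mulf_neq0 ?gt_eqF.
have hp : 0 < v1 * v2 by apply: mulr_gt0.
rewrite -mulrA pmulr_rgt0 // pmulr_lgt0 ?invr_gt0 ?mulr_gt0 // ltr_pdivrMr //.
split => H; nra.
Qed.
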